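(* With $a(p)=\sqrt{\lambda_0-2\Gamma(p)}$, one has $\Xi_\mu(\lambda_0,0)\le0$ if and only if $$\int_{p_0}^0a(p)\Big(\int_{p_0}^p\frac{ds}{a^3(s)}\Big)^2dp\le\frac{\sigma}{g^2}.$$
   Context: Setting: - $g>0$, $\sigma>0$, and $p_0<p_1<0$. - $\gamma=\gamma_1$ on $[p_0,p_1)$ and $\gamma=\gamma_2$ on $(p_1,0]$, with $\gamma_1\in C^\alpha([p_0,p_1])$ and $\gamma_2\in C^\alpha([p_1,0])$. - $\Gamma(p)=\int_0^p\gamma$, and $a(p;\lambda)=\sqrt{\lambda-2\Gamma(p)}$. - $\mathfrak z(\cdot;\lambda,\mu)$ solves $(a^3\mathfrak z')'-\mu a\mathfrak z=0$ on $(p_0,0)$ with $\mathfrak z(p_0)=0$, $\mathfrak z'(p_0)=1$. - $\Xi(\lambda,\mu):=\lambda^{3/2}\mathfrak z'(0;\lambda,\mu)-(g+\sigma\mu)\mathfrak z(0;\lambda,\mu)$. - $\lambda_0$ is the unique $\lambda>2\max\Gamma$ with $\frac1g=\int_{p_0}^0a(p;\lambda)^{-3}dp$. *)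

(* Defs.v *)
From Stdlib Require Import Reals Lra ClassicalEpsilon.
Open Scope R_scope.

(* Total (oriented) Riemann integral: the Stdlib RiemannInt when f is
   Riemann integrable on [a,b] (value is proof-independent), 0 otherwise. *)
Definition Rint (f : R -> R) (a b : R) : R :=
  match excluded_middle_informative
          (exists r : R, exists pr : Riemann_integrable f a b, RiemannInt pr = r) with
  | left H => proj1_sig (constructive_indefinite_description _ H)
  | right _ => 0
  end.

Definition holder_on (alpha lo hi : R) (f : R -> R) : Prop :=
  exists C : R, forall x y, lo <= x <= hi -> lo <= y <= hi -> x <> y ->
    Rabs (f x - f y) <= C * Rpower (Rabs (x - y)) alpha.

Definition right_deriv (f : R -> R) (x l : R) : Prop :=
  forall eps, 0 < eps -> exists delta, 0 < delta /\
    forall h, 0 < h < delta -> Rabs ((f (x + h) - f x) / h - l) < eps.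

Definition left_deriv (f : R -> R) (x l : R) : Prop :=
  forall eps, 0 < eps -> exists delta, 0 < delta /\
    forall h, - delta < h < 0 -> Rabs ((f (x + h) - f x) / h - l) < eps.

(* gamma = gamma1 on [p0,p1), gamma2 on (p1,0] (value at p1 irrelevant). *)
Definition gam (p1 : R) (gamma1 gamma2 : R -> R) (p : R) : R :=
  if Rlt_dec p p1 then gamma1 p else gamma2 p.

Definition Gam (p1 : R) (gamma1 gamma2 : R -> R) (p : R) : R :=
  Rint (gam p1 gamma1 gamma2) 0 p.

Definition aa (p1 : R) (gamma1 gamma2 : R -> R) (lam p : R) : R :=
  sqrt (lam - 2 * Gam p1 gamma1 gamma2 p).

(* z (with derivative dz) solves (a^3 z')' - mu a z = 0 on (p0,0),
   z(p0) = 0, z'(p0) = 1; derivatives at the endpoints are one-sided. *)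
Definition is_frak_z (p0 p1 : R) (gamma1 gamma2 : R -> R) (lam mu : R)
    (z dz : R -> R) : Prop :=
  z p0 = 0 /\ dz p0 = 1 /\
  right_deriv z p0 (dz p0) /\ left_deriv z 0 (dz 0) /\
  (forall p, p0 < p < 0 ->
     derivable_pt_lim z p (dz p) /\
     derivable_pt_lim (fun q => (aa p1 gamma1 gamma2 lam q) ^ 3 * dz q) p
                      (mu * aa p1 gamma1 gamma2 lam p * z p)).

Definition Xi (g sigma lam mu : R) (z dz : R -> R) : R :=
  Rpower lam (3/2) * dz 0 - (g + sigma * mu) * z 0.

(* Main.v *)
Require Import Defs.
From Stdlib Require Import Reals Lra ClassicalEpsilon.
From Coquelicot Require Import Coquelicot.
Open Scope R_scope.

Definition clamp (lo hi x : R) := Rmax lo (Rmin hi x).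

Lemma clamp_in lo hi x : lo <= hi -> lo <= clamp lo hi x <= hi.
Proof. intros; unfold clamp, Rmax, Rmin; repeat destruct Rle_dec; lra. Qed.

Lemma clamp_id lo hi x : lo <= x <= hi -> clamp lo hi x = x.
Proof. intros; unfold clamp, Rmax, Rmin; repeat destruct Rle_dec; lra. Qed.

Lemma clamp_lip lo hi x y : lo <= hi -> Rabs (clamp lo hi x - clamp lo hi y) <= Rabs (x - y).
Proof. intros; unfold clamp, Rmax, Rmin; repeat destruct Rle_dec; unfold Rabs;
  repeat destruct Rcase_abs; lra. Qed.

Definition cont_on (lo hi : R) (f : R -> R) : Prop :=
  forall x, lo <= x <= hi -> forall eps, 0 < eps -> exists d, 0 < d /\
    forall y, lo <= y <= hi -> Rabs (y - x) < d -> Rabs (f y - f x) < eps.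

Lemma cont_on_clamp lo hi f : lo <= hi -> cont_on lo hi f ->
  forall x, continuity_pt (fun y => f (clamp lo hi y)) x.
Proof.
  intros Hlh H x. unfold continuity_pt, continue_in, limit1_in, limit_in.
  intros eps He. simpl. unfold R_dist.
  destruct (H (clamp lo hi x) (clamp_in lo hi x Hlh) eps He) as [d [Hd Hy]].
  exists d; split; [lra|]. intros y [_ Hyx]. apply Hy; [apply clamp_in; auto|].
  eapply Rle_lt_trans; [apply clamp_lip; auto | exact Hyx].
Qed.

Lemma cont_pt_local f x : continuity_pt f x -> forall eps, 0 < eps ->
  exists d, 0 < d /\ forall y, Rabs (y - x) < d -> Rabs (f y - f x) < eps.
Proof.
  unfold continuity_pt, continue_in, limit1_in, limit_in. intros H eps He.
  destruct (H eps He) as [d [Hd Hy]]. exists d; split; [lra|]. intros y Hyx.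
  destruct (Req_dec y x) as [->|Hne].
  - rewrite Rminus_diag, Rabs_R0; lra.
  - apply Hy. split; [split; [exact I| auto] | exact Hyx].
Qed.

Lemma lip_cont f M x : (forall x y, Rabs (f x - f y) <= M * Rabs (x - y)) -> continuity_pt f x.
Proof.
  intros H. unfold continuity_pt, continue_in, limit1_in, limit_in.
  intros eps He. simpl. unfold R_dist.
  exists (eps / (Rabs M + 1)). split.
  - apply Rdiv_lt_0_compat; [lra | pose proof (Rabs_pos M); lra].
  - intros y [_ Hy]. eapply Rle_lt_trans; [apply H|].
    pose proof (Rabs_pos M). pose proof (Rabs_pos (y - x)).
    apply Rle_lt_trans with (Rabs M * Rabs (y - x)).
    + apply Rmult_le_compat_r; [lra| apply RRle_abs].
    + apply Rle_lt_trans with (Rabs M * (eps / (Rabs M + 1))).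
      * apply Rmult_le_compat_l; lra.
      * apply Rlt_le_trans with ((Rabs M + 1) * (eps / (Rabs M + 1))).
        -- apply Rmult_lt_compat_r; [apply Rdiv_lt_0_compat; lra| lra].
        -- right. field. lra.
Qed.

Lemma holder_cont alpha lo hi f : 0 < alpha -> holder_on alpha lo hi f -> cont_on lo hi f.
Proof.
  intros Ha [C HC] x Hx eps He.
  set (e := eps / (Rabs C + 1)).
  assert (He' : 0 < e) by (apply Rdiv_lt_0_compat; [lra| pose proof (Rabs_pos C); lra]).
  exists (Rpower e (/ alpha)). split; [apply exp_pos|].
  intros y Hy Hyx. destruct (Req_dec y x) as [->|Hne].
  - rewrite Rminus_diag, Rabs_R0; lra.
  - assert (Hp : 0 < Rabs (x - y)) by (apply Rabs_pos_lt; lra).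
    rewrite Rabs_minus_sym.
    eapply Rle_lt_trans; [apply HC; auto|].
    assert (Hr : Rpower (Rabs (x - y)) alpha <= e).
    { replace e with (Rpower (Rpower e (/ alpha)) alpha).
      - apply Rle_Rpower_l; [lra|]. split; auto. rewrite Rabs_minus_sym; lra.
      - rewrite Rpower_mult, Rinv_l, Rpower_1; lra. }
    assert (0 < Rpower (Rabs (x - y)) alpha) by apply exp_pos.
    apply Rle_lt_trans with (Rabs C * e).
    + apply Rle_trans with (Rabs C * Rpower (Rabs (x - y)) alpha).
      * apply Rmult_le_compat_r; [lra | apply RRle_abs].
      * apply Rmult_le_compat_l; [apply Rabs_pos | lra].
    + unfold e. pose proof (Rabs_pos C).
      apply Rlt_le_trans with ((Rabs C + 1) * (eps / (Rabs C + 1))).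
      * apply Rmult_lt_compat_r; [apply Rdiv_lt_0_compat; lra| lra].
      * right. field. lra.
Qed.

Lemma Rint_RInt f a b : ex_RInt f a b -> Rint f a b = RInt f a b.
Proof.
  intros H. unfold Rint. destruct excluded_middle_informative as [H1|H1].
  - destruct constructive_indefinite_description as [r [pr Hr]]. simpl.
    rewrite (RInt_Reals f a b pr). auto.
  - exfalso. apply H1. pose proof (ex_RInt_Reals_0 f a b H) as pr.
    exists (RiemannInt pr), pr; auto.
Qed.

Lemma cont_of_pt f x : continuity_pt f x -> continuous f x.
Proof. intros H. apply continuity_pt_filterlim. auto. Qed.

Lemma right_deriv_unique f H x r l1 l2 : 0 < r ->
  (forall h, 0 <= h < r -> f (x + h) = H (x + h)) ->
  right_deriv f x l1 -> derivable_pt_lim H x l2 -> l1 = l2.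
Proof.
  intros Hr Heq H1 H2. destruct (Req_dec l1 l2) as [E|Hne]; auto. exfalso.
  set (e := Rabs (l1 - l2) / 2).
  assert (He : 0 < e) by (unfold e; apply Rdiv_lt_0_compat; [apply Rabs_pos_lt; lra| lra]).
  destruct (H1 e He) as [d1 [Hd1 P1]].
  destruct (H2 e He) as [d2 P2].
  set (h := Rmin (Rmin d1 d2) r / 2).
  assert (Hm : 0 < Rmin (Rmin d1 d2) r) by (repeat apply Rmin_pos; auto; apply cond_pos).
  assert (Hh : 0 < h) by (unfold h; lra).
  assert (Hh1 : h < d1) by (unfold h; pose proof (Rmin_l (Rmin d1 d2) r); pose proof (Rmin_l d1 d2); lra).
  assert (Hh2 : h < d2) by (unfold h; pose proof (Rmin_l (Rmin d1 d2) r); pose proof (Rmin_r d1 d2); lra).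
  assert (Hh3 : h < r) by (unfold h; pose proof (Rmin_r (Rmin d1 d2) r); lra).
  specialize (P1 h (conj Hh Hh1)).
  assert (Hne0 : h <> 0) by lra.
  assert (Habs : Rabs h < d2) by (rewrite Rabs_pos_eq; lra).
  specialize (P2 h Hne0 Habs).
  rewrite (Heq h (conj (Rlt_le _ _ Hh) Hh3)) in P1.
  pose proof (Heq 0 (conj (Rle_refl 0) Hr)) as E0; rewrite Rplus_0_r in E0; rewrite E0 in P1.
  assert (Rabs (l1 - l2) < 2 * e).
  { replace (l1 - l2) with (-((H (x + h) - H x) / h - l1) + ((H (x + h) - H x) / h - l2)) by ring.
    eapply Rle_lt_trans; [apply Rabs_triang|]. rewrite Rabs_Ropp. lra. }
  unfold e in H0. lra.
Qed.

Lemma left_deriv_unique f H x r l1 l2 : 0 < r ->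
  (forall h, - r < h <= 0 -> f (x + h) = H (x + h)) ->
  left_deriv f x l1 -> derivable_pt_lim H x l2 -> l1 = l2.
Proof.
  intros Hr Heq H1 H2. destruct (Req_dec l1 l2) as [E|Hne]; auto. exfalso.
  set (e := Rabs (l1 - l2) / 2).
  assert (He : 0 < e) by (unfold e; apply Rdiv_lt_0_compat; [apply Rabs_pos_lt; lra| lra]).
  destruct (H1 e He) as [d1 [Hd1 P1]].
  destruct (H2 e He) as [d2 P2].
  set (h := - (Rmin (Rmin d1 d2) r / 2)).
  assert (Hm : 0 < Rmin (Rmin d1 d2) r) by (repeat apply Rmin_pos; auto; apply cond_pos).
  assert (Hh : h < 0) by (unfold h; lra).
  assert (Hh1 : - d1 < h) by (unfold h; pose proof (Rmin_l (Rmin d1 d2) r); pose proof (Rmin_l d1 d2); lra).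
  assert (Hh2 : - d2 < h) by (unfold h; pose proof (Rmin_l (Rmin d1 d2) r); pose proof (Rmin_r d1 d2); lra).
  assert (Hh3 : - r < h) by (unfold h; pose proof (Rmin_r (Rmin d1 d2) r); lra).
  specialize (P1 h (conj Hh1 Hh)).
  assert (Hne0 : h <> 0) by lra.
  assert (Habs : Rabs h < d2) by (rewrite Rabs_left; lra).
  specialize (P2 h Hne0 Habs).
  rewrite (Heq h (conj Hh3 (Rlt_le _ _ Hh))) in P1.
  pose proof (Heq 0 (conj (ltac:(lra) : -r < 0) (Rle_refl 0))) as E0; rewrite Rplus_0_r in E0; rewrite E0 in P1.
  assert (Rabs (l1 - l2) < 2 * e).
  { replace (l1 - l2) with (-((H (x + h) - H x) / h - l1) + ((H (x + h) - H x) / h - l2)) by ring.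
    eapply Rle_lt_trans; [apply Rabs_triang|]. rewrite Rabs_Ropp. lra. }
  unfold e in H0. lra.
Qed.

Lemma const_closed lo hi f c : lo < hi -> cont_on lo hi f ->
  (forall x, lo < x < hi -> f x = c) -> forall x, lo <= x <= hi -> f x = c.
Proof.
  intros Hlh Hc Hin x Hx.
  destruct (Req_dec (f x) c) as [E|Hne]; auto. exfalso.
  destruct (Hc x Hx (Rabs (f x - c))) as [d [Hd P]]; [apply Rabs_pos_lt; lra|].
  set (y := if Rle_dec x ((lo + hi) / 2) then x + Rmin (d / 2) ((hi - lo) / 4)
            else x - Rmin (d / 2) ((hi - lo) / 4)).
  assert (Hm : 0 < Rmin (d / 2) ((hi - lo) / 4)) by (apply Rmin_pos; lra).
  pose proof (Rmin_l (d / 2) ((hi - lo) / 4)). pose proof (Rmin_r (d / 2) ((hi - lo) / 4)).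
  assert (Hy : lo < y < hi /\ Rabs (y - x) < d).
  { unfold y; destruct Rle_dec; split; try split; try lra;
    [rewrite Rabs_pos_eq | rewrite Rabs_left]; lra. }
  destruct Hy as [Hy1 Hy2].
  specialize (P y (conj (Rlt_le _ _ (proj1 Hy1)) (Rlt_le _ _ (proj2 Hy1))) Hy2).
  rewrite (Hin y Hy1) in P. rewrite Rabs_minus_sym in P. lra.
Qed.

Lemma const_open lo hi f : (forall x, lo < x < hi -> derivable_pt_lim f x 0) ->
  forall x y, lo < x < hi -> lo < y < hi -> f x = f y.
Proof.
  intros H x y Hx Hy.
  assert (K : forall u v, lo < u < hi -> lo < v < hi -> u < v -> f u = f v).
  { intros u v Hu Hv Huv. destruct (MVT_cor2 f (fun _ => 0) u v Huv) as [c [Hc _]].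
    - intros c Hc. apply H. lra.
    - lra. }
  destruct (Rtotal_order x y) as [L|[E|L]]; [auto| subst; auto| symmetry; auto].
Qed.

Lemma ex_RInt_cont f a b : (forall x, continuity_pt f x) -> ex_RInt f a b.
Proof. intros H. apply (@ex_RInt_continuous R_CompleteNormedModule). intros z _. apply cont_of_pt, H. Qed.

Lemma deriv_RInt_cont f c : (forall x, continuity_pt f x) ->
  forall x, derivable_pt_lim (fun s => RInt f c s) x (f x).
Proof.
  intros H x. apply is_derive_Reals. apply (is_derive_RInt f (fun s => RInt f c s) c x).
  - apply filter_forall. intros y. apply (@RInt_correct R_CompleteNormedModule). apply ex_RInt_cont; auto.
  - apply cont_of_pt, H.
Qed.

Lemma dpl_cont f x l : derivable_pt_lim f x l -> continuity_pt f x.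
Proof. intros H. apply derivable_continuous_pt. exists l. exact H. Qed.

Lemma cont_pt_cont_on lo hi f : (forall x, lo <= x <= hi -> continuity_pt f x) -> cont_on lo hi f.
Proof.
  intros H x Hx eps He. destruct (cont_pt_local f x (H x Hx) eps He) as [d [Hd P]].
  exists d; split; auto.
Qed.

Lemma cont_on_minus lo hi f g : cont_on lo hi f -> cont_on lo hi g -> cont_on lo hi (fun x => f x - g x).
Proof.
  intros Hf Hg x Hx eps He.
  destruct (Hf x Hx (eps/2)) as [d1 [Hd1 P1]]; [lra|].
  destruct (Hg x Hx (eps/2)) as [d2 [Hd2 P2]]; [lra|].
  exists (Rmin d1 d2); split; [apply Rmin_pos; auto|].
  intros y Hy Hyx. pose proof (Rmin_l d1 d2). pose proof (Rmin_r d1 d2).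
  specialize (P1 y Hy ltac:(lra)). specialize (P2 y Hy ltac:(lra)).
  replace (f y - g y - (f x - g x)) with ((f y - f x) - (g y - g x)) by ring.
  eapply Rle_lt_trans; [apply Rabs_triang|]. rewrite Rabs_Ropp. lra.
Qed.

Lemma abs_RInt_gen f a b M : ex_RInt f a b ->
  (forall t, Rmin a b <= t <= Rmax a b -> Rabs (f t) <= M) ->
  Rabs (RInt f a b) <= M * Rabs (b - a).
Proof.
  intros Hi Hb. destruct (Rle_dec a b) as [L|L].
  - rewrite Rmin_left, Rmax_right in Hb by lra.
    rewrite (Rabs_pos_eq (b - a)) by lra. rewrite Rmult_comm. apply abs_RInt_le_const; auto.
  - rewrite Rmin_right, Rmax_left in Hb by lra.
    rewrite <- (opp_RInt_swap f b a) by (apply ex_RInt_swap; auto).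
    change (Rabs (- RInt f b a) <= M * Rabs (b - a)).
    rewrite Rabs_Ropp, (Rabs_minus_sym b a), (Rabs_pos_eq (a - b)) by lra. rewrite Rmult_comm.
    apply abs_RInt_le_const; [lra| apply ex_RInt_swap; auto | auto].
Qed.

Lemma cont_pt_ext f g x : (forall y, f y = g y) -> continuity_pt f x -> continuity_pt g x.
Proof. intros H Hf. apply (continuity_pt_ext f g x H Hf). Qed.

Definition ctsall (f : R -> R) := forall x, continuity_pt f x.

Lemma ca_mult f g : ctsall f -> ctsall g -> ctsall (fun y => f y * g y).
Proof. intros Hf Hg x. exact (continuity_pt_mult f g x (Hf x) (Hg x)). Qed.
Lemma ca_plus f g : ctsall f -> ctsall g -> ctsall (fun y => f y + g y).
Proof. intros Hf Hg x. exact (continuity_pt_plus f g x (Hf x) (Hg x)). Qed.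
Lemma ca_minus f g : ctsall f -> ctsall g -> ctsall (fun y => f y - g y).
Proof. intros Hf Hg x. exact (continuity_pt_minus f g x (Hf x) (Hg x)). Qed.
Lemma ca_const c : ctsall (fun _ => c).
Proof. intros x. apply continuity_pt_const. intros u v. reflexivity. Qed.
Lemma ca_inv f : ctsall f -> (forall x, f x <> 0) -> ctsall (fun y => / f y).
Proof. intros Hf Hn x. exact (continuity_pt_inv f x (Hf x) (Hn x)). Qed.
Lemma ca_pow3 f : ctsall f -> ctsall (fun y => f y ^ 3).
Proof.
  intros Hf. assert (H : ctsall (fun y => f y * (f y * (f y * 1)))).
  { apply ca_mult; auto. apply ca_mult; auto. apply ca_mult; auto. apply ca_const. }
  intros x. apply (continuity_pt_ext _ _ x (fun y => eq_refl) (H x)).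
Qed.
Lemma ca_div f g : ctsall f -> ctsall g -> (forall x, g x <> 0) -> ctsall (fun y => f y / g y).
Proof. intros Hf Hg Hn. apply ca_mult; auto. apply ca_inv; auto. Qed.
Lemma ca_deriv f df : (forall x, derivable_pt_lim f x (df x)) -> ctsall f.
Proof. intros H x. apply (dpl_cont f x (df x)), H. Qed.

Lemma z_cont_on p0 z dz : p0 < 0 ->
  right_deriv z p0 (dz p0) -> left_deriv z 0 (dz 0) ->
  (forall p, p0 < p < 0 -> derivable_pt_lim z p (dz p)) -> cont_on p0 0 z.
Proof.
  intros Hp Hr Hl Hi x Hx eps He.
  destruct (Req_dec x p0) as [->|N1]; [|destruct (Req_dec x 0) as [->|N2]].
  - destruct (Hr 1 ltac:(lra)) as [d [Hd P]].
    exists (Rmin d (eps / (Rabs (dz p0) + 1))). split.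
    { apply Rmin_pos; auto. apply Rdiv_lt_0_compat; [lra| pose proof (Rabs_pos (dz p0)); lra]. }
    intros y Hy Hyx. destruct (Req_dec y p0) as [->|Ne].
    { rewrite Rminus_diag, Rabs_R0; lra. }
    pose proof (Rmin_l d (eps / (Rabs (dz p0) + 1))). pose proof (Rmin_r d (eps / (Rabs (dz p0) + 1))).
    rewrite Rabs_pos_eq in Hyx by lra.
    specialize (P (y - p0) ltac:(lra)). replace (p0 + (y - p0)) with y in P by ring.
    set (h := y - p0) in *. set (D := z y - z p0) in *.
    assert (E : D = h * ((D / h - dz p0) + dz p0)) by (field; unfold h; lra).
    rewrite E, Rabs_mult, (Rabs_pos_eq h) by (unfold h; lra).
    assert (Rabs (D / h - dz p0 + dz p0) <= 1 + Rabs (dz p0)).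
    { eapply Rle_trans; [apply Rabs_triang| lra]. }
    apply Rle_lt_trans with (h * (Rabs (dz p0) + 1)).
    + apply Rmult_le_compat_l; [unfold h; lra | lra].
    + pose proof (Rabs_pos (dz p0)).
      apply Rlt_le_trans with ((eps / (Rabs (dz p0) + 1)) * (Rabs (dz p0) + 1)).
      * apply Rmult_lt_compat_r; lra.
      * right; field; lra.
  - destruct (Hl 1 ltac:(lra)) as [d [Hd P]].
    exists (Rmin d (eps / (Rabs (dz 0) + 1))). split.
    { apply Rmin_pos; auto. apply Rdiv_lt_0_compat; [lra| pose proof (Rabs_pos (dz 0)); lra]. }
    intros y Hy Hyx. destruct (Req_dec y 0) as [->|Ne].
    { rewrite Rminus_diag, Rabs_R0; lra. }
    pose proof (Rmin_l d (eps / (Rabs (dz 0) + 1))). pose proof (Rmin_r d (eps / (Rabs (dz 0) + 1))).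
    rewrite Rabs_left in Hyx by lra.
    specialize (P y ltac:(lra)). replace (0 + y) with y in P by ring.
    set (D := z y - z 0) in *.
    assert (E : D = y * ((D / y - dz 0) + dz 0)) by (field; lra).
    rewrite E, Rabs_mult, (Rabs_left y) by lra.
    assert (Rabs (D / y - dz 0 + dz 0) <= 1 + Rabs (dz 0)).
    { eapply Rle_trans; [apply Rabs_triang| lra]. }
    apply Rle_lt_trans with (- y * (Rabs (dz 0) + 1)).
    + apply Rmult_le_compat_l; lra.
    + pose proof (Rabs_pos (dz 0)).
      apply Rlt_le_trans with ((eps / (Rabs (dz 0) + 1)) * (Rabs (dz 0) + 1)).
      * apply Rmult_lt_compat_r; lra.
      * right; field; lra.
  - assert (Hc : continuity_pt z x) by (apply (dpl_cont z x (dz x)); apply Hi; lra).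
    destruct (cont_pt_local z x Hc eps He) as [d [Hd P]]. exists d; split; auto.
Qed.

Lemma RInt_pt (f : R -> R) a : RInt f a a = 0.
Proof. apply (@RInt_point R_CompleteNormedModule). Qed.

Lemma ode_rep p0 (a ac z dz : R -> R) mu :
  p0 < 0 -> ctsall ac -> (forall x, 0 < ac x) ->
  (forall p, p0 <= p <= 0 -> a p = ac p) ->
  z p0 = 0 -> dz p0 = 1 -> right_deriv z p0 (dz p0) -> left_deriv z 0 (dz 0) ->
  (forall p, p0 < p < 0 -> derivable_pt_lim z p (dz p) /\
     derivable_pt_lim (fun q => a q ^ 3 * dz q) p (mu * a p * z p)) ->
  (forall p, p0 <= p <= 0 -> z p = RInt (fun s => (ac p0 ^ 3 + mu *
        RInt (fun t => ac t * z (clamp p0 0 t)) p0 s) / ac s ^ 3) p0 p) /\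
  ac 0 ^ 3 * dz 0 = ac p0 ^ 3 + mu * RInt (fun t => ac t * z (clamp p0 0 t)) p0 0.
Proof.
  intros Hp Hac Hpos Ha Hz0 Hdz0 Hr Hl Hi.
  set (zc := fun x => z (clamp p0 0 x)).
  assert (Hzon : cont_on p0 0 z) by (apply (z_cont_on p0 z dz); auto; intros; apply Hi; auto).
  assert (Hzc : ctsall zc) by (intros x; apply cont_on_clamp; auto; lra).
  assert (Hzcz : forall p, p0 <= p <= 0 -> zc p = z p) by (intros; unfold zc; rewrite clamp_id; auto).
  set (A := ac p0 ^ 3).
  assert (HA : 0 < A) by (unfold A; apply pow_lt; auto).
  set (g := fun t => ac t * zc t).
  assert (Hg : ctsall g) by (apply ca_mult; auto).
  set (F := fun s => A + mu * RInt g p0 s).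
  assert (HF : forall x, derivable_pt_lim F x (mu * g x)).
  { intros x. unfold F. replace (mu * g x) with (0 + mu * g x) by ring.
    apply derivable_pt_lim_plus; [apply derivable_pt_lim_const|].
    apply (derivable_pt_lim_scal (fun s => RInt g p0 s)). apply deriv_RInt_cont; auto. }
  set (q := fun p => a p ^ 3 * dz p).
  set (m := p0 / 2).
  assert (Hm : p0 < m < 0) by (unfold m; lra).
  set (c := q m - F m).
  assert (Hqc : forall x, p0 < x < 0 -> q x - F x = c).
  { intros x Hx. unfold c. apply (const_open p0 0 (fun x => q x - F x)); auto.
    intros y Hy. replace 0 with (mu * a y * z y - mu * g y).
    - apply derivable_pt_lim_minus; [apply Hi; auto| apply HF].
    - unfold g. rewrite Hzcz, Ha by lra. ring. }
  assert (Hac3 : forall x, ac x ^ 3 <> 0) by (intros; apply pow_nonzero; specialize (Hpos x); lra).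
  set (h := fun s => (F s + c) / ac s ^ 3).
  assert (Hh : ctsall h).
  { apply ca_div; auto; [apply ca_plus; [apply (ca_deriv F _ HF)| apply ca_const]| apply ca_pow3; auto]. }
  set (H := fun p => RInt h p0 p).
  assert (HH : forall x, derivable_pt_lim H x (h x)) by (apply deriv_RInt_cont; auto).
  assert (Hdzh : forall x, p0 < x < 0 -> dz x = h x).
  { intros x Hx. unfold h. rewrite <- (Hqc x Hx). unfold q. rewrite Ha by lra.
    replace (F x + (ac x ^ 3 * dz x - F x)) with (ac x ^ 3 * dz x) by ring.
    field. specialize (Hpos x); lra. }
  assert (HzH : forall p, p0 <= p <= 0 -> z p - H p = z m - H m).
  { apply const_closed; auto.
    - apply cont_on_minus; auto. apply cont_pt_cont_on. intros. apply (ca_deriv H h HH).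
    - intros x Hx. apply (const_open p0 0 (fun p => z p - H p)); auto.
      intros y Hy. replace 0 with (dz y - h y) by (rewrite Hdzh; auto; ring).
      apply derivable_pt_lim_minus; [apply Hi; auto| apply HH]. }
  assert (HzH0 : forall p, p0 <= p <= 0 -> z p = H p).
  { intros p Hp'. pose proof (HzH p Hp'). pose proof (HzH p0 ltac:(lra)).
    unfold H in *. rewrite RInt_pt, Hz0 in H1. lra. }
  assert (Hc0 : c = 0).
  { assert (E : 1 = h p0).
    { rewrite <- Hdz0. apply (right_deriv_unique z H p0 (- p0)); auto; [lra|].
      intros u Hu. apply HzH0. lra. }
    unfold h, F in E. rewrite RInt_pt in E. fold A in E.
    apply (Rmult_eq_compat_l A) in E. field_simplify in E; [|lra]. lra. }
  assert (Hhe : forall s, h s = (A + mu * RInt g p0 s) / ac s ^ 3).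
  { intros s. unfold h, F. rewrite Hc0, Rplus_0_r. reflexivity. }
  split.
  - intros p Hp'. rewrite HzH0 by auto. unfold H. apply RInt_ext. intros; apply Hhe.
  - assert (E : dz 0 = h 0).
    { apply (left_deriv_unique z H 0 (- p0)); auto; [lra|].
      intros u Hu. apply HzH0. lra. }
    rewrite E, Hhe. unfold g, zc. generalize (RInt (fun t : R => ac t * z (clamp p0 0 t)) p0 0). intros r. unfold A. field. specialize (Hpos 0); lra.
Qed.

Lemma RInt_chasles_R (f : R -> R) a b c : ex_RInt f a b -> ex_RInt f b c ->
  RInt f a b + RInt f b c = RInt f a c.
Proof. intros H1 H2. exact (RInt_Chasles f a b c H1 H2). Qed.

Lemma RInt_swap_R (f : R -> R) a b : ex_RInt f a b -> RInt f b a = - RInt f a b.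
Proof. intros H. symmetry. exact (opp_RInt_swap f a b H). Qed.

Lemma a_setup p0 p1 alpha g1 g2 lam0 : p0 < p1 < 0 -> 0 < alpha ->
  holder_on alpha p0 p1 g1 -> holder_on alpha p1 0 g2 ->
  (forall p, p0 <= p <= 0 -> 2 * Gam p1 g1 g2 p < lam0) ->
  exists ac, ctsall ac /\ (forall x, 0 < ac x) /\
    (forall p, p0 <= p <= 0 -> aa p1 g1 g2 lam0 p = ac p).
Proof.
  intros Hp Ha H1 H2 Hl.
  set (gc1 := fun x => g1 (clamp p0 p1 x)).
  set (gc2 := fun x => g2 (clamp p1 0 x)).
  assert (C1 : ctsall gc1) by (intros x; apply cont_on_clamp; [lra| apply (holder_cont alpha); auto]).
  assert (C2 : ctsall gc2) by (intros x; apply cont_on_clamp; [lra| apply (holder_cont alpha); auto]).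
  set (gm := gam p1 g1 g2).
  assert (I2 : forall x, p1 <= x <= 0 -> ex_RInt gm 0 x).
  { intros x Hx. apply (ex_RInt_ext gc2); [|apply ex_RInt_cont; auto].
    intros t Ht. rewrite Rmin_right, Rmax_left in Ht by lra.
    unfold gc2, gm, gam. rewrite clamp_id by lra. destruct Rlt_dec; [lra|auto]. }
  assert (I : forall x, p0 <= x <= 0 -> ex_RInt gm 0 x).
  { intros x Hx. destruct (Rle_dec p1 x); [apply I2; lra|].
    apply (ex_RInt_Chasles gm 0 p1 x); [apply I2; lra|].
    apply (ex_RInt_ext gc1); [|apply ex_RInt_cont; auto].
    intros t Ht. rewrite Rmin_right, Rmax_left in Ht by lra.
    unfold gc1, gm, gam. rewrite clamp_id by lra. destruct Rlt_dec; [auto|lra]. }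
  destruct (continuity_ab_maj (fun x => Rabs (gc1 x)) p0 p1) as [x1 [Hx1 _]]; [lra| |].
  { intros c _. apply (continuity_pt_comp gc1 Rabs); [apply C1| apply Rcontinuity_abs]. }
  destruct (continuity_ab_maj (fun x => Rabs (gc2 x)) p1 0) as [x2 [Hx2 _]]; [lra| |].
  { intros c _. apply (continuity_pt_comp gc2 Rabs); [apply C2| apply Rcontinuity_abs]. }
  set (M := Rabs (gc1 x1) + Rabs (gc2 x2)).
  assert (HM0 : 0 <= M) by (unfold M; pose proof (Rabs_pos (gc1 x1)); pose proof (Rabs_pos (gc2 x2)); lra).
  assert (HB : forall t, p0 <= t <= 0 -> Rabs (gm t) <= M).
  { intros t Ht. unfold gm, gam. pose proof (Rabs_pos (gc1 x1)); pose proof (Rabs_pos (gc2 x2)).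
    destruct Rlt_dec.
    - specialize (Hx1 t ltac:(lra)). unfold gc1 in Hx1 at 1. rewrite clamp_id in Hx1 by lra.
      unfold M. lra.
    - specialize (Hx2 t ltac:(lra)). unfold gc2 in Hx2 at 1. rewrite clamp_id in Hx2 by lra.
      unfold M. lra. }
  assert (HG : forall x, p0 <= x <= 0 -> Gam p1 g1 g2 x = RInt gm 0 x).
  { intros x Hx. unfold Gam. apply Rint_RInt. apply I; auto. }
  assert (Lip : forall x y, p0 <= x <= 0 -> p0 <= y <= 0 ->
     Rabs (Gam p1 g1 g2 x - Gam p1 g1 g2 y) <= M * Rabs (x - y)).
  { intros x y Hx Hy. rewrite !HG by auto.
    assert (Ey : ex_RInt gm y 0) by (apply ex_RInt_swap, I; auto).
    assert (E : RInt gm 0 x - RInt gm 0 y = RInt gm y x).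
    { rewrite <- (RInt_chasles_R gm y 0 x Ey (I x Hx)).
      rewrite (RInt_swap_R gm 0 y (I y Hy)). ring. }
    rewrite E. apply abs_RInt_gen.
    - apply (ex_RInt_Chasles gm y 0 x Ey (I x Hx)).
    - intros t Ht. apply HB. split.
      + eapply Rle_trans; [|apply Ht]. apply Rmin_glb; lra.
      + eapply Rle_trans; [apply Ht|]. apply Rmax_lub; lra. }
  set (Gc := fun x => Gam p1 g1 g2 (clamp p0 0 x)).
  assert (CG : ctsall Gc).
  { intros x. apply (lip_cont Gc M). intros u v. unfold Gc.
    eapply Rle_trans; [apply Lip; apply clamp_in; lra|].
    apply Rmult_le_compat_l; auto. apply clamp_lip; lra. }
  assert (Hpos : forall x, 0 < lam0 - 2 * Gc x).
  { intros x. unfold Gc. pose proof (Hl (clamp p0 0 x) (clamp_in p0 0 x ltac:(lra))). lra. }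
  exists (fun x => sqrt (lam0 - 2 * Gc x)). split; [|split].
  - intros x. apply (continuity_pt_comp (fun x => lam0 - 2 * Gc x) sqrt).
    + apply ca_minus; [apply ca_const|]. apply ca_mult; [apply ca_const| auto].
    + apply continuity_pt_sqrt. specialize (Hpos x). lra.
  - intros x. apply sqrt_lt_R0. auto.
  - intros p Hp'. unfold aa, Gc. rewrite clamp_id by auto. reflexivity.
Qed.

Definition Jf (p0 : R) (ac : R -> R) (z : R -> R) (s : R) :=
  RInt (fun t => ac t * z (clamp p0 0 t)) p0 s.
Definition Kf p0 ac z := RInt (fun s => Jf p0 ac z s / ac s ^ 3) p0 0.

Lemma RInt_diff f g a b : ctsall f -> ctsall g ->
  RInt f a b - RInt g a b = RInt (fun t => f t - g t) a b.
Proof.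
  intros Hf Hg. symmetry.
  exact (RInt_minus f g a b (ex_RInt_cont f a b Hf) (ex_RInt_cont g a b Hg)).
Qed.

Lemma int_bound p0 f B : p0 < 0 -> ctsall f -> 0 <= B ->
  (forall t, p0 <= t <= 0 -> Rabs (f t) <= B) ->
  forall s, p0 <= s <= 0 -> Rabs (RInt f p0 s) <= B * (- p0).
Proof.
  intros Hp Hf HB Hb s Hs. eapply Rle_trans.
  - apply abs_RInt_gen; [apply ex_RInt_cont; auto|].
    intros t Ht. rewrite Rmin_left, Rmax_right in Ht by lra. apply Hb; lra.
  - apply Rmult_le_compat_l; auto. rewrite Rabs_pos_eq; lra.
Qed.

Lemma J_cont p0 ac z : ctsall ac -> ctsall (fun t => z (clamp p0 0 t)) -> ctsall (Jf p0 ac z).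
Proof.
  intros Ha Hz. apply (ca_deriv _ (fun t => ac t * z (clamp p0 0 t))).
  apply deriv_RInt_cont. apply ca_mult; auto.
Qed.

Lemma max_on f lo hi : lo <= hi -> ctsall f ->
  exists M, 0 <= M /\ (forall t, lo <= t <= hi -> Rabs (f t) <= M) /\
    exists x, lo <= x <= hi /\ M = Rabs (f x).
Proof.
  intros Hl Hf.
  destruct (continuity_ab_maj (fun x => Rabs (f x)) lo hi Hl) as [x [Hx Hxi]].
  { intros c _. apply (continuity_pt_comp f Rabs); [apply Hf| apply Rcontinuity_abs]. }
  exists (Rabs (f x)). split; [apply Rabs_pos|]. split; auto. exists x; auto.
Qed.

Lemma conv_lemma p0 A ac (Z : R -> R -> R) : p0 < 0 -> ctsall ac -> (forall x, 0 < ac x) ->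
  (forall mu, ctsall (fun t => Z mu (clamp p0 0 t))) ->
  (forall mu p, p0 <= p <= 0 ->
     Z mu p = RInt (fun s => (A + mu * Jf p0 ac (Z mu) s) / ac s ^ 3) p0 p) ->
  exists C mu0, 0 < mu0 /\ 0 <= C /\ forall mu, Rabs mu < mu0 ->
    Rabs (Jf p0 ac (Z mu) 0 - Jf p0 ac (Z 0) 0) <= C * Rabs mu /\
    Rabs (Kf p0 ac (Z mu) - Kf p0 ac (Z 0)) <= C * Rabs mu.
Proof.
  intros Hp Hac Hpos HZc HE.
  assert (Hn : forall x, ac x ^ 3 <> 0) by (intros x; apply pow_nonzero; specialize (Hpos x); lra).
  destruct (max_on ac p0 0 ltac:(lra) Hac) as [Amax [HA0 [HAb _]]].
  assert (Hi3 : ctsall (fun x => / ac x ^ 3)) by (apply ca_inv; auto; apply ca_pow3; auto).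
  destruct (max_on (fun x => / ac x ^ 3) p0 0 ltac:(lra) Hi3) as [Binv [HB0 [HBb _]]].
  set (K := Binv * (Amax * (- p0)) * (- p0)).
  assert (HK : 0 <= K) by (unfold K; apply Rmult_le_pos; [apply Rmult_le_pos|]; try lra; apply Rmult_le_pos; lra).
  assert (HJc : forall mu, ctsall (Jf p0 ac (Z mu))) by (intros; apply J_cont; auto).
  assert (HJb : forall mu M, 0 <= M -> (forall t, p0 <= t <= 0 -> Rabs (Z mu t) <= M) ->
     forall s, p0 <= s <= 0 -> Rabs (Jf p0 ac (Z mu) s) <= (Amax * M) * (- p0)).
  { intros mu M HM Hb s Hs. apply int_bound; auto.
    - apply ca_mult; auto.
    - apply Rmult_le_pos; auto.
    - intros t Ht. rewrite Rabs_mult, clamp_id by auto.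
      apply Rmult_le_compat; try apply Rabs_pos; auto. }
  assert (Key : forall mu M, 0 <= M -> (forall t, p0 <= t <= 0 -> Rabs (Z mu t) <= M) ->
     forall p, p0 <= p <= 0 -> Rabs (Z mu p - Z 0 p) <= Rabs mu * K * M).
  { intros mu M HM Hb p Hpp. rewrite (HE mu p Hpp), (HE 0 p Hpp).
    rewrite RInt_diff.
    2:{ apply ca_div; auto; [apply ca_plus; [apply ca_const| apply ca_mult; [apply ca_const| auto]]| apply ca_pow3; auto]. }
    2:{ apply ca_div; auto; [apply ca_plus; [apply ca_const| apply ca_mult; [apply ca_const| auto]]| apply ca_pow3; auto]. }
    rewrite (RInt_ext _ (fun s => mu * Jf p0 ac (Z mu) s * / ac s ^ 3)).
    2:{ intros x _. change ((A + mu * Jf p0 ac (Z mu) x) / ac x ^ 3 - (A + 0 * Jf p0 ac (Z 0) x) / ac x ^ 3 = mu * Jf p0 ac (Z mu) x * / ac x ^ 3 :> R). field. specialize (Hpos x); lra. }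
    replace (Rabs mu * K * M) with ((Rabs mu * (Amax * M * - p0) * Binv) * (- p0)) by (unfold K; ring).
    apply int_bound; auto.
    - apply ca_mult; [apply ca_mult; [apply ca_const| auto]| auto].
    - apply Rmult_le_pos; [apply Rmult_le_pos; [apply Rabs_pos|]|]; auto.
      apply Rmult_le_pos; [apply Rmult_le_pos|]; lra.
    - intros t Ht. rewrite !Rabs_mult. apply Rmult_le_compat; [apply Rmult_le_pos; apply Rabs_pos | apply Rabs_pos | |].
      + apply Rmult_le_compat_l; [apply Rabs_pos|]. apply HJb; auto.
      + apply HBb; auto. }
  destruct (max_on (fun t => Z 0 (clamp p0 0 t)) p0 0 ltac:(lra) (HZc 0)) as [M0 [HM0 [HM0b _]]].
  assert (HM0b' : forall t, p0 <= t <= 0 -> Rabs (Z 0 t) <= M0).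
  { intros t Ht. specialize (HM0b t Ht). rewrite clamp_id in HM0b; auto. }
  set (C1 := K * (2 * M0)).
  assert (HC1 : 0 <= C1) by (unfold C1; apply Rmult_le_pos; lra).
  set (mu0 := / (2 * K + 1)).
  assert (Hmu0 : 0 < mu0) by (unfold mu0; apply Rinv_0_lt_compat; lra).
  assert (Zd : forall mu, Rabs mu < mu0 -> forall t, p0 <= t <= 0 -> Rabs (Z mu t - Z 0 t) <= Rabs mu * C1).
  { intros mu Hmu.
    destruct (max_on (fun t => Z mu (clamp p0 0 t)) p0 0 ltac:(lra) (HZc mu)) as [Mm [HMm [HMmb [x [Hx HMx]]]]].
    assert (HMmb' : forall t, p0 <= t <= 0 -> Rabs (Z mu t) <= Mm).
    { intros t Ht. specialize (HMmb t Ht). rewrite clamp_id in HMmb; auto. }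
    rewrite clamp_id in HMx by auto.
    assert (Hsmall : Rabs mu * K <= / 2).
    { assert (Rabs mu * K <= mu0 * K) by (apply Rmult_le_compat_r; lra).
      assert (mu0 * K <= / 2).
      { unfold mu0. apply (Rmult_le_reg_l (2 * K + 1)); [lra|].
        rewrite <- Rmult_assoc, Rinv_r by lra. lra. }
      lra. }
    assert (HMm2 : Mm <= 2 * M0).
    { assert (Rabs (Z mu x) <= Rabs (Z 0 x) + Rabs mu * K * Mm).
      { replace (Z mu x) with (Z 0 x + (Z mu x - Z 0 x)) at 1 by ring.
        eapply Rle_trans; [apply Rabs_triang|]. apply Rplus_le_compat_l. apply Key; auto. }
      assert (Rabs mu * K * Mm <= / 2 * Mm) by (apply Rmult_le_compat_r; auto).
      specialize (HM0b' x Hx). lra. }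
    intros t Ht. eapply Rle_trans; [apply (Key mu Mm); auto|].
    unfold C1. rewrite <- Rmult_assoc. apply Rmult_le_compat_l; auto.
    apply Rmult_le_pos; [apply Rabs_pos| auto]. }
  set (CJ := Amax * C1 * (- p0)).
  assert (HCJ : 0 <= CJ) by (unfold CJ; apply Rmult_le_pos; [apply Rmult_le_pos|]; lra).
  assert (Jd : forall mu, Rabs mu < mu0 -> forall s, p0 <= s <= 0 ->
     Rabs (Jf p0 ac (Z mu) s - Jf p0 ac (Z 0) s) <= CJ * Rabs mu).
  { intros mu Hmu s Hs. unfold Jf. rewrite RInt_diff by (apply ca_mult; auto).
    replace (CJ * Rabs mu) with ((Amax * (Rabs mu * C1)) * (- p0)) by (unfold CJ; ring).
    apply int_bound; auto.
    - apply ca_minus; apply ca_mult; auto.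
    - apply Rmult_le_pos; auto. apply Rmult_le_pos; auto; apply Rabs_pos.
    - intros t Ht. rewrite !clamp_id by auto.
      replace (ac t * Z mu t - ac t * Z 0 t) with (ac t * (Z mu t - Z 0 t)) by ring.
      rewrite Rabs_mult. apply Rmult_le_compat; try apply Rabs_pos; auto. }
  exists (CJ * (1 + Binv * (- p0))), mu0. split; auto. split.
  { apply Rmult_le_pos; auto. assert (0 <= Binv * - p0) by (apply Rmult_le_pos; lra). lra. }
  intros mu Hmu. split.
  - eapply Rle_trans; [apply Jd; auto; lra|].
    apply Rmult_le_compat_r; [apply Rabs_pos|].
    assert (0 <= CJ * (Binv * - p0)) by (apply Rmult_le_pos; auto; apply Rmult_le_pos; lra). nra.
  - unfold Kf. rewrite RInt_diff.
    2:{ apply ca_div; auto. apply ca_pow3; auto. }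
    2:{ apply ca_div; auto. apply ca_pow3; auto. }
    eapply Rle_trans.
    + apply (int_bound p0 _ ((CJ * Rabs mu) * Binv)); auto; try lra.
      * apply ca_minus; apply ca_div; auto; apply ca_pow3; auto.
      * apply Rmult_le_pos; auto. apply Rmult_le_pos; auto; apply Rabs_pos.
      * intros t Ht. replace (Jf p0 ac (Z mu) t / ac t ^ 3 - Jf p0 ac (Z 0) t / ac t ^ 3)
          with ((Jf p0 ac (Z mu) t - Jf p0 ac (Z 0) t) * / ac t ^ 3) by (field; specialize (Hpos t); lra).
        rewrite Rabs_mult. apply Rmult_le_compat; try apply Rabs_pos; auto.
    + pose proof (Rabs_pos mu).
      assert (0 <= CJ * Rabs mu) by (apply Rmult_le_pos; auto).
      assert (0 <= CJ * Rabs mu * Binv * - p0) by (apply Rmult_le_pos; [apply Rmult_le_pos|]; lra).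
      nra.
Qed.

Lemma lin2 f1 f2 c1 c2 a b : ctsall f1 -> ctsall f2 ->
  RInt (fun s => c1 * f1 s + c2 * f2 s) a b = c1 * RInt f1 a b + c2 * RInt f2 a b.
Proof.
  intros H1 H2.
  pose proof (ex_RInt_cont f1 a b H1) as E1. pose proof (ex_RInt_cont f2 a b H2) as E2.
  transitivity (plus (scal c1 (RInt f1 a b)) (scal c2 (RInt f2 a b))); [|reflexivity].
  rewrite <- (RInt_scal f1 a b c1 E1). rewrite <- (RInt_scal f2 a b c2 E2).
  exact (RInt_plus (fun x => scal c1 (f1 x)) (fun x => scal c2 (f2 x)) a b
     (ex_RInt_scal f1 a b c1 E1) (ex_RInt_scal f2 a b c2 E2)).
Qed.

Lemma RInt_scal_R f c a b : ctsall f -> RInt (fun s => c * f s) a b = c * RInt f a b.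
Proof. intros H. exact (RInt_scal f a b c (ex_RInt_cont f a b H)). Qed.

Lemma Rint_eq_RInt f fc a b : ctsall fc -> (forall x, Rmin a b < x < Rmax a b -> f x = fc x) ->
  Rint f a b = RInt fc a b.
Proof.
  intros Hc He. rewrite Rint_RInt.
  - apply RInt_ext. auto.
  - apply (ex_RInt_ext fc); [intros; symmetry; auto| apply ex_RInt_cont; auto].
Qed.

Lemma Rint_zero f a : Rint f a a = 0.
Proof. rewrite Rint_RInt by apply ex_RInt_point. apply RInt_pt. Qed.

Lemma ibp p0 ac I Jn : ctsall ac -> (forall x, 0 < ac x) ->
  I = (fun s => RInt (fun t => / ac t ^ 3) p0 s) ->
  Jn = (fun s => RInt (fun t => ac t * I t) p0 s) ->
  RInt (fun s => Jn s / ac s ^ 3) p0 0 = I 0 * Jn 0 - RInt (fun s => ac s * I s ^ 2) p0 0.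
Proof.
  intros Hac Hpos HI HJ.
  assert (Hi3 : ctsall (fun x => / ac x ^ 3)) by (apply ca_inv; [apply ca_pow3; auto| intros x; apply pow_nonzero; specialize (Hpos x); lra]).
  assert (DI : forall x, derivable_pt_lim I x (/ ac x ^ 3)) by (rewrite HI; apply deriv_RInt_cont; auto).
  assert (CI : ctsall I) by (apply (ca_deriv I _ DI)).
  assert (DJ : forall x, derivable_pt_lim Jn x (ac x * I x)) by (rewrite HJ; apply deriv_RInt_cont; apply ca_mult; auto).
  assert (CJ : ctsall Jn) by (apply (ca_deriv Jn _ DJ)).
  set (df := fun s => / ac s ^ 3 * Jn s + I s * (ac s * I s)).
  assert (Hd : is_RInt df p0 0 (minus (I 0 * Jn 0) (I p0 * Jn p0))).
  { apply (is_RInt_derive (fun s => I s * Jn s) df).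
    - intros x _. apply is_derive_Reals. apply (derivable_pt_lim_mult I Jn x); auto.
    - intros x _. apply cont_of_pt. unfold df.
      apply ca_plus; apply ca_mult; auto; apply ca_mult; auto. }
  apply (@is_RInt_unique R_CompleteNormedModule) in Hd.
  assert (HI0 : I p0 = 0) by (rewrite HI; apply RInt_pt).
  rewrite HI0 in Hd.
  assert (E : RInt df p0 0 = 1 * RInt (fun s => Jn s / ac s ^ 3) p0 0 + 1 * RInt (fun s => ac s * I s ^ 2) p0 0).
  { rewrite <- lin2.
    - apply RInt_ext. intros x _. unfold df. change (/ ac x ^ 3 * Jn x + I x * (ac x * I x) = 1 * (Jn x / ac x ^ 3) + 1 * (ac x * I x ^ 2) :> R). field.
      specialize (Hpos x); lra.
    - apply ca_div; auto; [apply ca_pow3; auto| intros x; apply pow_nonzero; specialize (Hpos x); lra].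
    - apply ca_mult; auto. apply ca_mult; auto. apply ca_mult; auto. apply ca_const. }
  rewrite Hd in E. change (I 0 * Jn 0 - 0 * Jn p0 = 1 * RInt (fun s => Jn s / ac s ^ 3) p0 0 + 1 * RInt (fun s => ac s * I s ^ 2) p0 0) in E.
  lra.
Qed.

Lemma abs3 a b c : Rabs (a - b - c) <= Rabs a + Rabs b + Rabs c.
Proof.
  unfold Rminus. eapply Rle_trans; [apply Rabs_triang|]. rewrite Rabs_Ropp.
  eapply Rplus_le_compat_r. eapply Rle_trans; [apply Rabs_triang|]. rewrite Rabs_Ropp. lra.
Qed.

Theorem mainTheorem9
  (g sigma p0 p1 alpha : R) (gamma1 gamma2 : R -> R) (lam0 : R)
  (Z DZ : R -> R -> R)
  (Hg : 0 < g) (Hsigma : 0 < sigma) (Hp : p0 < p1 < 0)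
  (Halpha : 0 < alpha < 1)
  (Hg1 : holder_on alpha p0 p1 gamma1) (Hg2 : holder_on alpha p1 0 gamma2)
  (Hlam0 : forall p, p0 <= p <= 0 -> 2 * Gam p1 gamma1 gamma2 p < lam0)
  (Hlam0eq : / g = Rint (fun p => / (aa p1 gamma1 gamma2 lam0 p) ^ 3) p0 0)
  (HZ : forall mu, is_frak_z p0 p1 gamma1 gamma2 lam0 mu (Z mu) (DZ mu)) :
  exists l : R,
    derivable_pt_lim (fun mu => Xi g sigma lam0 mu (Z mu) (DZ mu)) 0 l /\
    (l <= 0 <->
     Rint (fun p => aa p1 gamma1 gamma2 lam0 p *
                    (Rint (fun s => / (aa p1 gamma1 gamma2 lam0 s) ^ 3) p0 p) ^ 2)
          p0 0 <= sigma / g ^ 2).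
Proof.
  destruct (a_setup p0 p1 alpha gamma1 gamma2 lam0 Hp (proj1 Halpha) Hg1 Hg2 Hlam0) as [ac [Hac [Hpos Haa]]].
  set (a := aa p1 gamma1 gamma2 lam0) in *.
  assert (Hp0 : p0 < 0) by lra.
  set (A := ac p0 ^ 3).
  assert (HA : 0 < A) by (unfold A; apply pow_lt; auto).
  assert (Hn3 : forall x, ac x ^ 3 <> 0) by (intros x; apply pow_nonzero; specialize (Hpos x); lra).
  assert (Hi3 : ctsall (fun x => / ac x ^ 3)) by (apply ca_inv; auto; apply ca_pow3; auto).
  assert (HE : forall mu, (forall p, p0 <= p <= 0 -> Z mu p = RInt (fun s => (A + mu * Jf p0 ac (Z mu) s) / ac s ^ 3) p0 p)
      /\ ac 0 ^ 3 * DZ mu 0 = A + mu * Jf p0 ac (Z mu) 0).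
  { intros mu. destruct (HZ mu) as [H0 [H1 [H2 [H3 H4]]]].
    exact (ode_rep p0 a ac (Z mu) (DZ mu) mu Hp0 Hac Hpos Haa H0 H1 H2 H3 H4). }
  assert (HZc : forall mu, ctsall (fun t => Z mu (clamp p0 0 t))).
  { intros mu x. destruct (HZ mu) as [H0 [H1 [H2 [H3 H4]]]]. apply cont_on_clamp; [lra|].
    apply (z_cont_on p0 (Z mu) (DZ mu)); auto. intros; apply H4; auto. }
  destruct (conv_lemma p0 A ac Z Hp0 Hac Hpos HZc (fun mu => proj1 (HE mu))) as [C [mu0 [Hmu0 [HC Hconv]]]].
  set (I0 := RInt (fun s => / ac s ^ 3) p0 0).
  assert (HgI : I0 = / g).
  { rewrite Hlam0eq. symmetry. apply Rint_eq_RInt; auto. intros x Hx.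
    rewrite Rmin_left, Rmax_right in Hx by lra. unfold a. rewrite Haa by lra. reflexivity. }
  assert (HRp : Rpower lam0 (3 / 2) = ac 0 ^ 3).
  { rewrite <- Haa by lra. unfold a, aa, Gam. rewrite Rint_zero, Rmult_0_r, Rminus_0_r.
    assert (Hl : 0 < lam0).
    { pose proof (Hlam0 0 ltac:(lra)). unfold Gam in H. rewrite Rint_zero in H. lra. }
    replace (3 / 2) with (1 + / 2) by field. rewrite Rpower_plus, Rpower_1, Rpower_sqrt by auto.
    pose proof (sqrt_sqrt lam0 ltac:(lra)). simpl. rewrite Rmult_1_r, <- Rmult_assoc, H. ring. }
  set (Lm := fun mu => Jf p0 ac (Z mu) 0).
  set (Km := fun mu => Kf p0 ac (Z mu)).
  assert (HX : forall mu, Xi g sigma lam0 mu (Z mu) (DZ mu) =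
     mu * (Lm mu - g * Km mu - sigma * A * I0 - sigma * mu * Km mu)).
  { intros mu. unfold Xi. rewrite HRp, (proj2 (HE mu)), (proj1 (HE mu) 0) by lra.
    rewrite (RInt_ext _ (fun s => A * / ac s ^ 3 + mu * (Jf p0 ac (Z mu) s / ac s ^ 3))).
    2:{ intros x _. change ((A + mu * Jf p0 ac (Z mu) x) / ac x ^ 3 = A * / ac x ^ 3 + mu * (Jf p0 ac (Z mu) x / ac x ^ 3) :> R).
        field. specialize (Hpos x); lra. }
    rewrite lin2; auto.
    2:{ apply ca_div; auto; [apply J_cont; auto| apply ca_pow3; auto]. }
    fold I0. unfold Lm, Km, Kf.
    assert (Hg1' : g * I0 = 1) by (rewrite HgI; field; lra).
    replace A with (A * (g * I0)) at 1 by (rewrite Hg1'; ring). ring. }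
  exists (Lm 0 - g * Km 0 - sigma * A * I0). split.
  - intros eps Heps.
    set (C' := C + g * C + sigma * (Rabs (Km 0) + C * mu0)).
    assert (HC' : 0 <= C').
    { unfold C'. pose proof (Rabs_pos (Km 0)).
      assert (0 <= g * C) by (apply Rmult_le_pos; lra).
      assert (0 <= C * mu0) by (apply Rmult_le_pos; lra).
      assert (0 <= sigma * (Rabs (Km 0) + C * mu0)) by (apply Rmult_le_pos; lra). lra. }
    assert (Hd : 0 < Rmin mu0 (eps / (C' + 1))) by (apply Rmin_pos; auto; apply Rdiv_lt_0_compat; lra).
    exists (mkposreal _ Hd). intros h Hh0 Hhd. simpl in Hhd.
    pose proof (Rmin_l mu0 (eps / (C' + 1))). pose proof (Rmin_r mu0 (eps / (C' + 1))).
    rewrite Rplus_0_l, (HX h), (HX 0).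
    replace ((h * (Lm h - g * Km h - sigma * A * I0 - sigma * h * Km h) -
              0 * (Lm 0 - g * Km 0 - sigma * A * I0 - sigma * 0 * Km 0)) / h -
             (Lm 0 - g * Km 0 - sigma * A * I0))
      with ((Lm h - Lm 0) - g * (Km h - Km 0) - sigma * h * Km h) by (field; auto).
    destruct (Hconv h ltac:(lra)) as [H1 H2]. fold (Lm h) (Lm 0) (Km h) (Km 0) in H1, H2.
    pose proof (Rabs_pos h).
    assert (HK : Rabs (Km h) <= Rabs (Km 0) + C * mu0).
    { replace (Km h) with (Km 0 + (Km h - Km 0)) by ring.
      eapply Rle_trans; [apply Rabs_triang|].
      assert (C * Rabs h <= C * mu0) by (apply Rmult_le_compat_l; lra). lra. }
    eapply Rle_lt_trans; [apply abs3|].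
    rewrite (Rabs_mult g), (Rabs_pos_eq g) by lra.
    rewrite (Rabs_mult (sigma * h)), (Rabs_mult sigma), (Rabs_pos_eq sigma) by lra.
    assert (g * Rabs (Km h - Km 0) <= g * (C * Rabs h)) by (apply Rmult_le_compat_l; lra).
    assert (sigma * Rabs h * Rabs (Km h) <= sigma * Rabs h * (Rabs (Km 0) + C * mu0)).
    { apply Rmult_le_compat_l; auto. apply Rmult_le_pos; lra. }
    apply Rle_lt_trans with (Rabs h * C').
    { unfold C'. nra. }
    apply Rle_lt_trans with (Rabs h * (C' + 1)); [nra|].
    apply Rlt_le_trans with (eps / (C' + 1) * (C' + 1)).
    + apply Rmult_lt_compat_r; lra.
    + right. field. lra.
  - set (I := fun s => RInt (fun t => / ac t ^ 3) p0 s).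
    assert (CI : ctsall I) by (apply (ca_deriv I (fun x => / ac x ^ 3)); unfold I; apply deriv_RInt_cont; auto).
    set (Jn := fun s => RInt (fun t => ac t * I t) p0 s).
    assert (Z0 : forall p, p0 <= p <= 0 -> Z 0 p = A * I p).
    { intros p Hpp. rewrite (proj1 (HE 0) p Hpp). unfold I. rewrite <- RInt_scal_R by auto.
      apply RInt_ext. intros x _. change ((A + 0 * Jf p0 ac (Z 0) x) / ac x ^ 3 = A * / ac x ^ 3 :> R).
      field. specialize (Hpos x); lra. }
    assert (J0 : forall s, p0 <= s <= 0 -> Jf p0 ac (Z 0) s = A * Jn s).
    { intros s Hs. unfold Jf, Jn. rewrite <- RInt_scal_R by (apply ca_mult; auto).
      apply RInt_ext. intros x Hx. rewrite Rmin_left, Rmax_right in Hx by lra.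
      rewrite clamp_id, Z0 by lra. change (ac x * (A * I x) = A * (ac x * I x) :> R). ring. }
    assert (EL : Lm 0 = A * Jn 0) by (unfold Lm; apply J0; lra).
    assert (CJ : ctsall Jn) by (apply (ca_deriv Jn (fun x => ac x * I x)); unfold Jn; apply deriv_RInt_cont; apply ca_mult; auto).
    assert (EK : Km 0 = A * RInt (fun s => Jn s / ac s ^ 3) p0 0).
    { unfold Km, Kf. rewrite <- RInt_scal_R by (apply ca_div; auto; apply ca_pow3; auto).
      apply RInt_ext. intros x Hx. rewrite Rmin_left, Rmax_right in Hx by lra.
      rewrite J0 by lra. change (A * Jn x / ac x ^ 3 = A * (Jn x / ac x ^ 3) :> R). field.
      specialize (Hpos x); lra. }
    rewrite (ibp p0 ac I Jn Hac Hpos eq_refl eq_refl) in EK.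
    set (Q := RInt (fun s => ac s * I s ^ 2) p0 0) in EK.
    assert (EQ : Rint (fun p => a p * (Rint (fun s => / a s ^ 3) p0 p) ^ 2) p0 0 = Q).
    { unfold Q. apply Rint_eq_RInt.
      - apply ca_mult; auto. apply ca_mult; auto. apply ca_mult; auto. apply ca_const.
      - intros x Hx. rewrite Rmin_left, Rmax_right in Hx by lra.
        unfold a. rewrite Haa by lra. f_equal. f_equal. unfold I.
        apply Rint_eq_RInt; auto. intros t Ht. rewrite Rmin_left, Rmax_right in Ht by lra.
        rewrite Haa by lra. reflexivity. }
    rewrite EQ. fold I0 in EK. change (I 0) with I0 in EK.
    assert (El : Lm 0 - g * Km 0 - sigma * A * I0 = A * g * (Q - sigma / g ^ 2)).
    { rewrite EL, EK, HgI. field. lra. }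
    rewrite El. assert (HAg : 0 < A * g) by (apply Rmult_lt_0_compat; lra).
    split; intros H; nra.
Qed.
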